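(* Let $M\in\mathbb{R}^{n\times n}$ be such that the function $x\mapsto x^TMx$ belongs to the class $\mathcal{Q}$, and let $Z=\sum_{P\in\mathcal{P}} P^TMP$, where $\mathcal{P}$ is the set of all $n\times n$ permutation matrices. Then there exists $\alpha>0$ such that $x^TZx=\alpha V(x)$ for all $x\in\mathbb{R}^n$, where $V(x)=\sum_{i=1}^n (x_i-\bar{x})^2$ with $\bar{x}=\frac1n\sum_{i=1}^n x_i$.
   Context: Fix a positive integer $n$. Let $\mathbf{e}\in\mathbb{R}^n$ be the all-ones vector. A square matrix is stochastic if it is entrywise nonnegative and each row sums to $1$. Let $\mathcal{A}\subset\mathbb{R}^{n\times n}$ be the set of stochastic matrices $A=(a_{ij})$ such that: (i) $a_{ii}>0$ for all $i$; (ii) all positive entries in any given row of $A$ are equal; (iii) $a_{ij}>0$ if and only if $a_{ji}>0$; (iv) the graph on $\{1,\dots,n\}$ with edge set $\{(i,j): a_{ij}>0\}$ is connected. The class $\mathcal{Q}$ consists of all functions $Q(x)=x^TMx$ on $\mathbb{R}^n$ where (a) $M$ is nonzero, symmetric and nonnegative definite; (b) $x^TA^TMAx\le x^TMx$ for all $A\in\mathcal{A}$ and $x\in\mathbb{R}^n$; (c) $Q(\mathbf{e})=0$ (equivalently $M\mathbf{e}=0$). For a permutation $\sigma$ of $\{1,\dots,n\}$, the permutation matrix $P_\sigma$ is defined by $(P_\sigma x)_i=x_{\sigma(i)}$; $\mathcal{P}$ is the set of all such matrices. *)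

(* Defs.v *)
From mathcomp Require Import all_boot all_order all_algebra all_fingroup.
From mathcomp Require Import reals.
Set Implicit Arguments. Unset Strict Implicit. Unset Printing Implicit Defensive.
Import Order.TTheory GRing.Theory Num.Theory.
Local Open Scope ring_scope.

Section Defs.
Variable R : realType.
Variable n : nat.

Definition qform (M : 'M[R]_n) (x : 'cV[R]_n) : R := (x^T *m M *m x) 0 0.

Definition ones : 'cV[R]_n := const_mx 1.

Definition stochastic (A : 'M[R]_n) : Prop :=
  (forall i j, 0 <= A i j) /\ (forall i, \sum_j A i j = 1).

Definition classA (A : 'M[R]_n) : Prop :=
  [/\ stochastic A,
      (forall i, 0 < A i i),
      (forall i j k, 0 < A i j -> 0 < A i k -> A i j = A i k),
      (forall i j, 0 < A i j <-> 0 < A j i) &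
      (forall i j, connect (fun a b : 'I_n => 0 < A a b) i j)].

Definition nonneg_def (M : 'M[R]_n) : Prop := forall x, 0 <= qform M x.

(* M defines a function x |-> x^T M x in the class \mathcal{Q} *)
Definition classQ (M : 'M[R]_n) : Prop :=
  [/\ M != 0, M^T = M, nonneg_def M,
      (forall A x, classA A -> qform (A^T *m M *m A) x <= qform M x) &
      qform M ones = 0].

(* permutation matrix: (P_s x)_i = x_(s i) *)
Definition permmx (s : 'S_n) : 'M[R]_n := \matrix_(i, j) (s i == j)%:R.

Definition xbar (x : 'cV[R]_n) : R := (\sum_i x i 0) / n%:R.

Definition V (x : 'cV[R]_n) : R := \sum_i (x i 0 - xbar x) ^+ 2.

End Defs.
Arguments permmx {R n} s.
Arguments qform {R n} M x.
Arguments xbar {R n} x.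
Arguments V {R n} x.
Arguments classQ {R n} M.
Arguments classA {R n} A.
Arguments ones {R n}.

(* Main.v *)
Require Import Defs.
From mathcomp Require Import all_boot all_order all_algebra all_fingroup.
From mathcomp Require Import reals.
From mathcomp Require Import zify ring lra.
Import Order.TTheory GRing.Theory Num.Theory.
Local Open Scope ring_scope.

Section Aux.
Variable R : realType.
Variable n : nat.
Implicit Types (A M : 'M[R]_n) (x y u v : 'cV[R]_n).

Lemma qformE A y : qform A y = \sum_i \sum_j y i 0 * A i j * y j 0.
Proof.
rewrite /qform mxE exchange_big; apply: eq_bigr => j _.
rewrite mxE mulr_suml; apply: eq_bigr => i _. by rewrite !mxE.
Qed.

Lemma qform_sum I (r : seq I) (F : I -> 'M[R]_n) x :
  qform (\sum_(s <- r) F s) x = \sum_(s <- r) qform (F s) x.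
Proof. by rewrite /qform mulmx_sumr mulmx_suml summxE. Qed.

Lemma permmx_mul (s : 'S_n) x i : (permmx s *m x) i 0 = x (s i) 0.
Proof.
rewrite mxE (bigD1 (s i)) //= big1 ?addr0; first by rewrite mxE eqxx mul1r.
by move=> j /negbTE ne; rewrite mxE eq_sym ne mul0r.
Qed.

Lemma qform_perm M (s : 'S_n) x :
  qform ((permmx s)^T *m M *m permmx s) x = qform M (permmx s *m x).
Proof. by rewrite /qform trmx_mul !mulmxA. Qed.

Definition bf M u v := (u^T *m M *m v) 0 0.

Lemma qformD M u v (t : R) :
  qform M (u + t *: v) = qform M u + t * (bf M u v + bf M v u) + t ^+ 2 * qform M v.
Proof.
rewrite /qform /bf [(u + _)^T]linearD /= [(t *: v)^T]linearZ /= !mulmxDl !mulmxDr -!scalemxAl -!scalemxAr.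
rewrite !mxE; ring.
Qed.

Lemma bf_delta M i j : bf M (delta_mx i 0) (delta_mx j 0) = M i j.
Proof.
by rewrite /bf trmx_delta -rowE -colE !mxE.
Qed.

End Aux.

Lemma Ve_alg (R : realType) (n : nat) (S1 S2 : R) : n%:R != 0 :> R ->
  S2 - S1 * (S1 / n%:R) *+ 2 + (S1 / n%:R) ^+ 2 *+ n = S2 - S1 ^+ 2 / n%:R.
Proof. move=> nz; rewrite -[_ *+ n]mulr_natr; field; exact: nz. Qed.

Lemma final_alg (R : realType) (c1 c2 S1 S2 N nn tr : R) :
  nn != 0 -> nn - 1 != 0 -> nn * c1 = N * S2 ->
  nn * (c1 + (nn - 1) * c2) = N * S1 ^+ 2 ->
  c1 * tr - c2 * tr = N * tr / (nn - 1) * (S2 - S1 ^+ 2 / nn).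
Proof.
move=> nn0 nn1 e1 e2.
have ec1 : c1 = N * S2 / nn by rewrite -e1; field.
have ec2 : c2 = (N * S1 ^+ 2 / nn - c1) / (nn - 1).
  by rewrite -e2; field; rewrite nn0 nn1.
by rewrite ec2 ec1; field; rewrite ?nn0 ?nn1.
Qed.

Theorem lemma2 (R : realType) (n : nat) (M : 'M[R]_n) :
  classQ M ->
  let Z := \sum_(s : 'S_n) ((permmx s)^T *m M *m permmx s) in
  exists2 alpha : R, 0 < alpha & forall x : 'cV[R]_n, qform Z x = alpha * V x.
Proof.
case=> Mn0 Msym Mpsd _ Mones Z.
set tr := \sum_i M i i.
have diag i : M i i = qform M (delta_mx i 0).
  by rewrite -bf_delta.
have trpos : 0 < tr.
  rewrite lt_def; apply/andP; split; last first.
    by apply: sumr_ge0 => i _; rewrite diag; apply: Mpsd.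
  apply/negP => /eqP tr0.
  have d0 i : M i i = 0.
    apply/eqP; move/eqP: tr0; rewrite psumr_eq0 => [/allP H|i' _]; last first.
      by rewrite diag; apply: Mpsd.
    by apply: H; rewrite mem_index_enum.
  move/negP: Mn0; apply; apply/eqP/matrixP => i j; rewrite mxE.
  have := Mpsd (delta_mx i 0 + (- M i j) *: delta_mx j 0).
  rewrite qformD -!diag !d0 !bf_delta.
  have -> : M j i = M i j by rewrite -{1}Msym mxE.
  move=> h; apply/eqP; rewrite -sqrf_eq0 eq_le sqr_ge0 andbT; nra.

have n1 : (1 < n)%N.
  rewrite ltnNge; apply/negP => n1.
  have ord_eq (i j : 'I_n) : i = j.
    apply/val_inj; move: (ltn_ord i) (ltn_ord j); rewrite /=; lia.
  suff : tr = 0 by move=> t0; move: trpos; rewrite t0 ltxx.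
  rewrite -Mones qformE /tr; apply: eq_bigr => i _.
  rewrite (bigD1 i) //= big1; last by move=> j; rewrite (ord_eq j i) eqxx.
  by rewrite !mxE mul1r mulr1 addr0.
have n0 : (0 < n)%N by apply: ltn_trans n1.
set i0 := Ordinal n0; set j0 := Ordinal n1.
have ij0 : i0 != j0 by [].
set N := \sum_(s : 'S_n) (1 : R).
have Npos : 0 < N.
  rewrite /N (bigD1 1%g) //=; apply: (lt_le_trans ltr01).
  by rewrite lerDl; apply: sumr_ge0 => s _; apply: ler01.
set nn : R := n%:R.
have nn1' : 0 < nn - 1 by rewrite subr_gt0 /nn ltr1n.
exists (N * tr / (nn - 1)).
  by apply: divr_gt0; [exact: mulr_gt0 | ].
move=> x.
set f := fun i j => \sum_(s : 'S_n) x (s i) 0 * x (s j) 0.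
have finv (t : 'S_n) i j : f (t i) (t j) = f i j.
  rewrite /f [RHS](reindex_inj (mulgI t)) /=; apply: eq_bigr => s _.
  by rewrite !permM.
have H1 i : f i i = f i0 i0.
  by rewrite -(finv (tperm i0 i) i0 i0) tpermL.
have H2 i j : i != j -> f i j = f i0 j0.
  move=> ij.
  rewrite -(finv (tperm i0 i * tperm (tperm i0 i j0) j)%g i0 j0) !permM tpermL.
  have ne1 : tperm i0 i j0 != i.
    by rewrite -{2}(tpermL i0 i) (inj_eq (@perm_inj _ _)) eq_sym.
  by rewrite tpermL (tpermD ne1) // eq_sym.
have qZ : qform Z x = \sum_i \sum_j M i j * f i j.
  rewrite qform_sum; under eq_bigr do rewrite qform_perm qformE.
  rewrite exchange_big; apply: eq_bigr => i _.
  rewrite exchange_big; apply: eq_bigr => j _.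
  rewrite mulr_sumr; apply: eq_bigr => s _.
  rewrite !permmx_mul; ring.
set S1 := \sum_i x i 0.
set S2 := \sum_i x i 0 ^+ 2.
set c1 := f i0 i0; set c2 := f i0 j0.
have sumS (s : 'S_n) : \sum_i x (s i) 0 = S1 by rewrite [RHS](reindex_inj (@perm_inj _ s)).
have S2e : \sum_i f i i = N * S2.
  rewrite /f exchange_big /N mulr_suml; apply: eq_bigr => s _.
  rewrite mul1r [RHS](reindex_inj (@perm_inj _ s)) /=; apply: eq_bigr => i _.
  by rewrite expr2.
have S1e : \sum_i \sum_j f i j = N * S1 ^+ 2.
  under eq_bigr do rewrite exchange_big.
  rewrite exchange_big /N mulr_suml; apply: eq_bigr => s _.
  under eq_bigr do rewrite -mulr_sumr.
  by rewrite -mulr_suml !sumS mul1r expr2.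
have R1 i : \sum_j f i j = c1 + (nn - 1) * c2.
  rewrite (bigD1 i) //= H1; congr (_ + _).
  rewrite (eq_bigr (fun _ => c2)); last by move=> j ji; apply: H2; rewrite eq_sym.
  rewrite sumr_const cardC1 card_ord -mulr_natl /nn -[in n%:R](prednK n0) -addn1 natrD.
  by rewrite addrK.
have RM i : \sum_j M i j * f i j = M i i * c1 + (\sum_j M i j - M i i) * c2.
  rewrite (bigD1 i) //= H1 [X in _ = _ + (X - _) * _](bigD1 i) //=.
  rewrite (eq_bigr (fun j => M i j * c2)); last by move=> j ji; rewrite H2 // eq_sym.
  by rewrite -mulr_suml [M i i + _]addrC addrK.
have Msum : \sum_i \sum_j M i j = 0.
  rewrite -[RHS]Mones qformE; apply: eq_bigr => i _; apply: eq_bigr => j _.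
  by rewrite !mxE mul1r mulr1.
have nn0 : nn != 0 by rewrite /nn pnatr_eq0 -lt0n.
have Ve : V x = S2 - S1 ^+ 2 / nn.
  rewrite /V /xbar -/S1.
  under eq_bigr do rewrite sqrrB.
  rewrite big_split sumrB /= -/S2 ?sumrMnl -mulr_suml -/S1 sumr_const card_ord.
  exact: Ve_alg.
have e1 : nn * c1 = N * S2.
  by rewrite -S2e; under eq_bigr do rewrite H1; rewrite sumr_const card_ord mulr_natl.
have e2 : nn * (c1 + (nn - 1) * c2) = N * S1 ^+ 2.
  by rewrite -S1e; under eq_bigr do rewrite R1; rewrite sumr_const card_ord mulr_natl.
have qZ' : qform Z x = c1 * tr - c2 * tr.
  rewrite qZ; under eq_bigr do rewrite RM; rewrite big_split /= -!mulr_suml sumrB Msum /tr.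
  by rewrite sub0r mulNr mulrC [c2 * _]mulrC.
rewrite qZ' Ve.
have nn1 : nn - 1 != 0 by rewrite subr_eq0 /nn pnatr_eq1 gtn_eqF.
by apply: final_alg.
Qed.
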